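(* For any integers $b \ge 2$ and $n \ge 1$, let $X_0,\dots,X_{n-1}$ be produced by the balanced base-$b$ enumeration procedure described in the context, and for $\ell \in \{1,\dots,L\}$ and $d \in \{0,\dots,b-1\}$ let $c_{\ell,d}(n) = |\{k \in \{0,\dots,n-1\} : (X_k)_\ell = d\}|$. Then $\max_{\ell,d} c_{\ell,d}(n) - \min_{\ell,d} c_{\ell,d}(n) \le 1$. Equivalently, for each $\ell$, every digit $d$ appears either $\lfloor n/b \rfloor$ or $\lceil n/b \rceil$ times in position $\ell$ among $X_0,\dots,X_{n-1}$.
   Context: Balanced base-$b$ enumeration: given $b \ge 2$ and $n \ge 1$, let $L = \min\{\ell \ge 1 : b^\ell \ge n\}$. For $t = 0,1,\dots,b^{L-1}-1$ in increasing order, let $(j_2,\dots,j_L) \in \{0,\dots,b-1\}^{L-1}$ be the unique digits with $t = \sum_{r=2}^L j_r b^{L-r}$ (base-$b$ representation left-padded with zeros), and for $i = 0,1,\dots,b-1$ in increasing order output the vector $\bigl(i, (i+j_2) \bmod b, \dots, (i+j_L) \bmod b\bigr) \in \{0,\dots,b-1\}^L$. The outputs are indexed $X_0, X_1, \dots$ in the order produced, and the procedure stops as soon as $n$ vectors $X_0,\dots,X_{n-1}$ have been produced. $(X_k)_\ell$ denotes the $\ell$-th coordinate of $X_k$. *)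

(* Defs.v *)
From mathcomp Require Import all_boot.
Set Implicit Arguments. Unset Strict Implicit. Unset Printing Implicit Defensive.

(* The k-th output (0-indexed) is produced at
   outer index t = k %/ b and inner index i = k %% b.  The digits of t are
   j_r = (t %/ b^(L-r)) %% b for r = 2..L (base-b, left-padded to L-1 digits).
   [bal_coord b L k l] is the coordinate (X_k)_l, with l 1-indexed in 1..L:
   (X_k)_1 = i and (X_k)_l = (i + j_l) mod b for l >= 2. *)
Definition bal_coord (b L k l : nat) : nat :=
  let i := k %% b in
  let t := k %/ b in
  if l == 1 then i else (i + (t %/ b ^ (L - l)) %% b) %% b.

Definition bal_X (b L k : nat) : seq nat := [seq bal_coord b L k l | l <- iota 1 L].

Definition bal_count (b L n l d : nat) : nat :=
  count (fun k => nth 0 (bal_X b L k) l.-1 == d) (iota 0 n).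

(* Main.v *)
Require Import Defs.
From mathcomp Require Import all_boot.
From mathcomp Require Import zify.

Section Aux.
Variables (b : nat) (f : nat -> nat) (d : nat).
Hypothesis hb : 0 < b.
Hypothesis hd : d < b.

Definition Pk (k : nat) : bool := ((k %% b + f (k %/ b)) %% b == d).

Lemma block_count t : count Pk (iota (t * b) b) = 1.
Proof.
have -> : iota (t * b) b = map (fun i => t * b + i) (iota 0 b).
  by rewrite -(addn0 (t*b)) iotaDl addn0.
rewrite count_map.
set g := fun i => (i + f t) %% b.
have E : count (preim (fun i => t * b + i) Pk) (iota 0 b)
        = count (pred1 d) (map g (iota 0 b)).
  rewrite count_map; apply: eq_in_count => i; rewrite mem_iota => hi; have {}hi : i < b by lia.
  rewrite /Pk /g /= modnMDl divnMDl // (divn_small hi) addn0 (modn_small hi).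
  by [].
rewrite E.
have U : uniq (map g (iota 0 b)).
  rewrite map_inj_in_uniq ?iota_uniq // => i j; rewrite !mem_iota => hi hj.
  have {}hi : i < b by lia. have {}hj : j < b by lia.
  rewrite /g => /eqP; rewrite eqn_modDr => /eqP.
  by rewrite (modn_small hi) (modn_small hj).
have S : map g (iota 0 b) =i iota 0 b.
  have Sub : {subset map g (iota 0 b) <= iota 0 b}.
    move=> x /mapP[i _ ->]; rewrite mem_iota /g add0n ltn_mod hb //.
  apply: (uniq_min_size U Sub _).2; by rewrite size_map.
rewrite (count_uniq_mem _ U) S.
by rewrite mem_iota add0n hd.
Qed.

Lemma blocks_count q : count Pk (iota 0 (q * b)) = q.
Proof.
elim: q => [|q IH]; first by rewrite mul0n.
by rewrite mulSn addnC iotaD count_cat IH add0n block_count addn1.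
Qed.

Lemma count_bounds n : n %/ b <= count Pk (iota 0 n) <= n %/ b + 1.
Proof.
set q := n %/ b; set r := n %% b.
have -> : iota 0 n = iota 0 (q * b + r) by rewrite /q /r -divn_eq.
have hr : r <= b by rewrite ltnW // ltn_mod.
rewrite iotaD count_cat add0n blocks_count leq_addr /= leq_add2l.
have := block_count q.
rewrite -(subnKC hr) iotaD count_cat => <-.
exact: leq_addr.
Qed.
End Aux.

Lemma coord_eq b L k l : bal_coord b L k l =
  (k %% b + (fun t => if l == 1 then 0 else (t %/ b ^ (L - l)) %% b) (k %/ b)) %% b.
Proof.
rewrite /bal_coord; case: (l == 1) => //.
by rewrite addn0 modn_mod.
Qed.

Lemma count_eq b L n l d : 1 <= l <= L ->
  bal_count b L n l d =
  count (Pk b (fun t => if l == 1 then 0 else (t %/ b ^ (L - l)) %% b) d) (iota 0 n).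
Proof.
move=> /andP[h1 h2]; rewrite /bal_count; apply: eq_count => k.
rewrite /bal_X (nth_map 0); last by rewrite size_iota; lia.
rewrite nth_iota; last by lia.
have -> : 1 + l.-1 = l by lia.
by rewrite coord_eq.
Qed.

Theorem theoremA2 (b n L : nat) (hb : 2 <= b) (hn : 1 <= n)
  (hL1 : 1 <= L) (hLn : n <= b ^ L)
  (hLmin : forall l, 1 <= l -> n <= b ^ l -> L <= l) :
  forall l1 d1 l2 d2, 1 <= l1 <= L -> d1 < b -> 1 <= l2 <= L -> d2 < b ->
    bal_count b L n l1 d1 <= bal_count b L n l2 d2 + 1.
Proof.
move=> l1 d1 l2 d2 hl1 hd1 hl2 hd2.
have hb0 : 0 < b by lia.
rewrite (count_eq _ _ _ _ _ hl1) (count_eq _ _ _ _ _ hl2).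
move: (@count_bounds b (fun t => if l1 == 1 then 0 else (t %/ b ^ (L - l1)) %% b) d1 hb0 hd1 n).
move: (@count_bounds b (fun t => if l2 == 1 then 0 else (t %/ b ^ (L - l2)) %% b) d2 hb0 hd2 n).
lia.
Qed.
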